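(* An axiomatic extension $\vdash$ of intuitionistic linear logic $\mathsf{ILL}$ has the inconsistency lemma if and only if there exist $k\in\mathbb{Z}^+$ and a function $f\colon\mathbb{Z}^+\to\mathbb{Z}^+$ such that the theorems of $\vdash$ include the formulas $\bot^k\to x$ and $(1\land\lnot(x\land1)^m)^{f(m)}\to\lnot(1\land x)^k$ for every $m\in\mathbb{Z}^+$. In this case the inconsistency lemma is witnessed by the sets $\sim_n(x_1,\dots,x_n)=\{\lnot(1\land x_1\land\cdots\land x_n)^k\}$.
   Context: A commutative FL-algebra is $\boldsymbol{A}=\langle A;\land,\lor,\cdot,\to,0,1\rangle$ where $\langle A;\cdot,1\rangle$ is a commutative monoid, $\langle A;\land,\lor\rangle$ is a lattice, and $a\cdot b\le c\iff a\le b\to c$; $\mathsf{FL}_e$ is the variety of these. $\mathsf{ILL}$ is the logic in this language with $\Gamma\vdash_{\mathsf{ILL}}\varphi$ iff there is a finite $\Sigma\subseteq\Gamma$ with $\mathsf{FL}_e\vDash\&_{\gamma\in\Sigma}\gamma\ge1\Longrightarrow\varphi\ge1$. An axiomatic extension of $\mathsf{ILL}$ is a logic obtained from $\mathsf{ILL}$ by adding a substitution-closed set of axioms (theorems). Powers: $a^1=a$, $a^{m+1}=a^m\cdot a$. Abbreviations: $\bot=1\land(1\to0)\land(0\to1)\land(1\to(1\to1))\land((1\to1)\to1)$ and $\lnot\varphi=\varphi\to\bot$; $\lnot\psi^m$ means $\lnot(\psi^m)$. A finite set $\Gamma$ is inconsistent in $\vdash$ if $\Gamma\vdash\varphi$ for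 every formula $\varphi$. $\vdash$ has the inconsistency lemma if for every $n\ge1$ there is a finite set $\sim_n(x_1..x_n)$ of formulas such that for every finite $\Gamma\cup\{\varphi_1..\varphi_n\}$: $\Gamma\cup\{\varphi_1..\varphi_n\}$ is inconsistent iff $\Gamma\vdash\sim_n(\varphi_1..\varphi_n)$. *)

(* Defs.v *)
From Stdlib Require Import List Arith.
Import ListNotations.

(** Formulas in the language <and, or, ., ->, 0, 1>; variables indexed by nat
    (variable x_i of the paper is [Var (i-1)]; x is [Var 0]). *)
Inductive form : Type :=
| Var : nat -> form
| Meet : form -> form -> form
| Join : form -> form -> form
| Mul : form -> form -> form
| Imp : form -> form -> form
| Zero : form
| One : form.

Fixpoint subst (s : nat -> form) (p : form) : form :=
  match p with
  | Var i => s i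
  | Meet a b => Meet (subst s a) (subst s b)
  | Join a b => Join (subst s a) (subst s b)
  | Mul a b => Mul (subst s a) (subst s b)
  | Imp a b => Imp (subst s a) (subst s b)
  | Zero => Zero
  | One => One
  end.

Fixpoint vars_below (n : nat) (p : form) : Prop :=
  match p with
  | Var i => i < n
  | Meet a b | Join a b | Mul a b | Imp a b => vars_below n a /\ vars_below n b
  | Zero | One => True
  end.

Record FLe : Type := {
  car : Type;
  meet : car -> car -> car;
  join : car -> car -> car;
  mul : car -> car -> car;
  imp : car -> car -> car;
  zero : car;
  one : car;
  meetA : forall a b c, meet a (meet b c) = meet (meet a b) c;
  joinA : forall a b c, join a (join b c) = join (join a b) c;
  meetC : forall a b, meet a b = meet b a;
  joinC : forall a b, join a b = join b a;
  meet_join_absorb : forall a b, meet a (join a b) = a;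
  join_meet_absorb : forall a b, join a (meet a b) = a;
  mulA : forall a b c, mul a (mul b c) = mul (mul a b) c;
  mulC : forall a b, mul a b = mul b a;
  mul1 : forall a, mul a one = a;
  residuation : forall a b c, meet (mul a b) c = mul a b <-> meet a (imp b c) = a
}.

Definition le (A : FLe) (a b : car A) : Prop := meet A a b = a.

Fixpoint eval (A : FLe) (v : nat -> car A) (p : form) : car A :=
  match p with
  | Var i => v i
  | Meet a b => meet A (eval A v a) (eval A v b)
  | Join a b => join A (eval A v a) (eval A v b)
  | Mul a b => mul A (eval A v a) (eval A v b)
  | Imp a b => imp A (eval A v a) (eval A v b)
  | Zero => zero A
  | One => one A
  end.

Definition ILL_cons (Gamma : form -> Prop) (phi : form) : Prop :=
  exists Sigma : list form,
    (forall g, In g Sigma -> Gamma g) /\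
    forall (A : FLe) (v : nat -> car A),
      (forall g, In g Sigma -> le A (one A) (eval A v g)) ->
      le A (one A) (eval A v phi).

Definition subst_closed (Ax : form -> Prop) : Prop :=
  forall s p, Ax p -> Ax (subst s p).

Definition ext_cons (Ax : form -> Prop) (Gamma : form -> Prop) (phi : form) : Prop :=
  ILL_cons (fun g => Gamma g \/ Ax g) phi.

Definition theorem (Ax : form -> Prop) (phi : form) : Prop :=
  ext_cons Ax (fun _ => False) phi.

Definition of_list (l : list form) : form -> Prop := fun g => In g l.

Definition inconsistent (Ax : form -> Prop) (Gamma : list form) : Prop :=
  forall phi, ext_cons Ax (of_list Gamma) phi.

(** tilde n is the finite set ~_n(x_1,...,x_n) (x_i = Var (i-1)); given
    phis = [phi_1; ...; phi_n], ~_n(phi_1..phi_n) is obtained by substitution. *)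
Definition IL_witnessed (Ax : form -> Prop) (tilde : nat -> list form) : Prop :=
  forall n, 1 <= n ->
    forall (Gamma phis : list form), length phis = n ->
      (inconsistent Ax (Gamma ++ phis) <->
       forall psi, In psi (tilde n) ->
         ext_cons Ax (of_list Gamma) (subst (fun i => nth i phis One) psi)).

Definition has_IL (Ax : form -> Prop) : Prop :=
  exists tilde : nat -> list form,
    (forall n psi, In psi (tilde n) -> vars_below n psi) /\ IL_witnessed Ax tilde.

(** phi^(n+1) *)
Fixpoint powS (p : form) (n : nat) : form :=
  match n with
  | O => p
  | S n' => Mul (powS p n') p
  end.

(** phi^m for m >= 1 (phi^1 = phi, phi^(m+1) = phi^m . phi). *)
Definition pow (p : form) (m : nat) : form := powS p (m - 1).

Definition bot : form :=
  Meet (Meet (Meet (Meet One (Imp One Zero)) (Imp Zero One))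
             (Imp One (Imp One One)))
       (Imp (Imp One One) One).

Definition neg (p : form) : form := Imp p bot.

Definition big_meet (n : nat) : form :=
  fold_left (fun a i => Meet a (Var i)) (seq 0 n) One.

Definition sim (k n : nat) : list form := [neg (pow (big_meet n) k)].

Definition x : form := Var 0.

Definition conditions (Ax : form -> Prop) (k : nat) (f : nat -> nat) : Prop :=
  1 <= k /\ (forall m, 1 <= m -> 1 <= f m) /\
  theorem Ax (Imp (pow bot k) x) /\
  forall m, 1 <= m ->
    theorem Ax (Imp (pow (Meet One (neg (pow (Meet x One) m))) (f m))
                    (neg (pow (Meet One x) k))).

(* Main.v *)
Require Import Defs.
From Stdlib Require Import List Arith Lia.
From Stdlib Require Import PropExtensionality FunctionalExtensionality ProofIrrelevance IndefiniteDescription.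
Import ListNotations.

Lemma meet_idem (A : FLe) (a : car A) : meet A a a = a.
Proof.
  rewrite <- (join_meet_absorb A a a) at 2.
  rewrite meet_join_absorb. reflexivity.
Qed.

Lemma le_refl (A : FLe) (a : car A) : le A a a.
Proof. apply meet_idem. Qed.

Lemma le_trans (A : FLe) (a b c : car A) : le A a b -> le A b c -> le A a c.
Proof.
  unfold le; intros H1 H2. rewrite <- H1, <- meetA, H2. reflexivity.
Qed.

Lemma le_antisym (A : FLe) (a b : car A) : le A a b -> le A b a -> a = b.
Proof. unfold le; intros H1 H2. rewrite <- H1, meetC. exact H2. Qed.

Lemma meet_l (A : FLe) (a b : car A) : le A (meet A a b) a.
Proof.
  unfold le. rewrite (meetC A a b), <- meetA, meet_idem. reflexivity.
Qed.

Lemma meet_r (A : FLe) (a b : car A) : le A (meet A a b) b.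
Proof.
  unfold le. rewrite <- meetA, meet_idem. reflexivity.
Qed.

Lemma meet_glb (A : FLe) (a b c : car A) : le A c a -> le A c b -> le A c (meet A a b).
Proof. unfold le; intros H1 H2. rewrite meetA, H1, H2. reflexivity. Qed.

Lemma le_join (A : FLe) (a b : car A) : le A a b <-> join A a b = b.
Proof.
  unfold le; split; intro H.
  - rewrite <- H, joinC, meetC. apply join_meet_absorb.
  - rewrite <- H. apply meet_join_absorb.
Qed.

Lemma join_l (A : FLe) (a b : car A) : le A a (join A a b).
Proof. apply meet_join_absorb. Qed.

Lemma join_r (A : FLe) (a b : car A) : le A b (join A a b).
Proof. rewrite joinC. apply meet_join_absorb. Qed.

Lemma join_lub (A : FLe) (a b c : car A) : le A a c -> le A b c -> le A (join A a b) c.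
Proof.
  rewrite !le_join; intros H1 H2. rewrite <- joinA, H2, H1. reflexivity.
Qed.

Lemma res (A : FLe) (a b c : car A) : le A (mul A a b) c <-> le A a (imp A b c).
Proof. apply residuation. Qed.

Lemma mul1l (A : FLe) (a : car A) : mul A (one A) a = a.
Proof. rewrite mulC. apply mul1. Qed.

Lemma mul_mono_l (A : FLe) (a b c : car A) : le A a b -> le A (mul A a c) (mul A b c).
Proof.
  intro H. apply res. eapply le_trans. exact H. apply res. apply le_refl.
Qed.

Lemma mul_mono_r (A : FLe) (a b c : car A) : le A a b -> le A (mul A c a) (mul A c b).
Proof. intro H. rewrite !(mulC A c). apply mul_mono_l, H. Qed.

Lemma mul_mono (A : FLe) (a b c d : car A) : le A a b -> le A c d -> le A (mul A a c) (mul A b d).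
Proof.
  intros H1 H2. eapply le_trans. apply mul_mono_l, H1. apply mul_mono_r, H2.
Qed.

Lemma mp_le (A : FLe) (a b : car A) : le A (mul A (imp A a b) a) b.
Proof. apply res. apply le_refl. Qed.

Lemma one_imp (A : FLe) (a b : car A) : le A (one A) (imp A a b) <-> le A a b.
Proof. rewrite <- res, mul1l. tauto. Qed.

Lemma imp_anti (A : FLe) (a a' b : car A) : le A a' a -> le A (imp A a b) (imp A a' b).
Proof.
  intro H. apply res. eapply le_trans. apply mul_mono_r, H. apply mp_le.
Qed.

Fixpoint apow (A : FLe) (a : car A) (n : nat) : car A :=
  match n with O => a | S n' => mul A (apow A a n') a end.

Lemma eval_powS (A : FLe) v p n : eval A v (powS p n) = apow A (eval A v p) n.
Proof. induction n; simpl; congruence. Qed.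

Lemma apow_ge1 (A : FLe) a n : le A (one A) a -> le A (one A) (apow A a n).
Proof.
  intro H. induction n; simpl; auto.
  rewrite <- (mul1 A (one A)). apply mul_mono; auto.
Qed.

Lemma apow_le1 (A : FLe) a n : le A a (one A) -> le A (apow A a n) (one A).
Proof.
  intro H. induction n; simpl; auto.
  rewrite <- (mul1 A (one A)). apply mul_mono; auto.
Qed.

Lemma apow_anti (A : FLe) a n n' : le A a (one A) -> n <= n' -> le A (apow A a n') (apow A a n).
Proof.
  intros H Hn. induction Hn. apply le_refl.
  eapply le_trans; [|exact IHHn]. simpl.
  rewrite <- (mul1 A (apow A a m)) at 2. apply mul_mono_r, H.
Qed.

Lemma apow_add (A : FLe) a n1 n2 : apow A a (S (n1 + n2)) = mul A (apow A a n1) (apow A a n2).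
Proof.
  induction n2.
  - rewrite Nat.add_0_r. reflexivity.
  - rewrite Nat.add_succ_r. simpl in *. rewrite IHn2, mulA. reflexivity.
Qed.

Lemma apow_mono (A : FLe) a b n : le A a b -> le A (apow A a n) (apow A b n).
Proof. intro H; induction n; simpl; auto. apply mul_mono; auto. Qed.

Lemma eval_subst (A : FLe) v s p : eval A v (subst s p) = eval A (fun i => eval A v (s i)) p.
Proof. induction p; simpl; congruence. Qed.

Lemma cons_mono Ax (G G' : form -> Prop) phi :
  (forall g, G g -> G' g) -> ext_cons Ax G phi -> ext_cons Ax G' phi.
Proof.
  intros HG [S [HS HE]]. exists S. split; auto.
  intros g Hg. destruct (HS g Hg); auto.
Qed.

Lemma cons_in Ax (G : form -> Prop) g : G g -> ext_cons Ax G g.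
Proof.
  intro H. exists [g]. split.
  - intros g' [<-|[]]. auto.
  - intros A v Hv. apply Hv. left; reflexivity.
Qed.

Lemma cons_ax Ax (G : form -> Prop) g : Ax g -> ext_cons Ax G g.
Proof.
  intro H. exists [g]. split.
  - intros g' [<-|[]]. auto.
  - intros A v Hv. apply Hv. left; reflexivity.
Qed.

Lemma cons_list Ax (G : form -> Prop) (L : list form) :
  (forall a, In a L -> ext_cons Ax G a) ->
  exists S, (forall g, In g S -> G g \/ Ax g) /\
    forall A v, (forall g, In g S -> le A (one A) (eval A v g)) ->
      forall a, In a L -> le A (one A) (eval A v a).
Proof.
  induction L as [|a L IH]; intro H.
  - exists []. split. intros g []. intros A v _ a' [].
  - destruct IH as [S [HS HE]]. intros; apply H; right; auto.
    destruct (H a (or_introl eq_refl)) as [S1 [HS1 HE1]].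
    exists (S1 ++ S). split.
    + intros g Hg. apply in_app_or in Hg. destruct Hg; auto.
    + intros A v Hv a' [<-|Ha'].
      * apply HE1. intros; apply Hv, in_or_app; auto.
      * apply (HE A v); auto. intros; apply Hv, in_or_app; auto.
Qed.

Lemma cons_sem Ax (G : form -> Prop) (L : list form) b :
  (forall a, In a L -> ext_cons Ax G a) ->
  (forall A v, (forall a, In a L -> le A (one A) (eval A v a)) -> le A (one A) (eval A v b)) ->
  ext_cons Ax G b.
Proof.
  intros H1 H2. destruct (cons_list Ax G L H1) as [S [HS HE]].
  exists S. split; auto.
Qed.

Lemma cons_cut Ax (G H : form -> Prop) phi :
  (forall h, H h -> ext_cons Ax G h) -> ext_cons Ax H phi -> ext_cons Ax G phi.
Proof.
  intros HH [S [HS HE]]. apply (cons_sem Ax G S); auto.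
  intros a Ha. destruct (HS a Ha); auto. apply cons_ax; auto.
Qed.

Lemma cons_thm_subst Ax (G : form -> Prop) s p :
  subst_closed Ax -> theorem Ax p -> ext_cons Ax G (subst s p).
Proof.
  intros HAx [S [HS HE]]. exists (map (subst s) S). split.
  - intros g Hg. apply in_map_iff in Hg. destruct Hg as [g0 [<- Hg0]].
    right. apply HAx. destruct (HS g0 Hg0) as [[]|]; auto.
  - intros A v Hv. rewrite eval_subst. apply HE.
    intros g Hg. rewrite <- eval_subst. apply Hv. apply in_map; auto.
Qed.

Lemma cons_sem1 Ax G a b : ext_cons Ax G a ->
  (forall A v, le A (one A) (eval A v a) -> le A (one A) (eval A v b)) -> ext_cons Ax G b.
Proof.
  intros H1 H2. apply (cons_sem Ax G [a]).
  - intros a' [<-|[]]; auto.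
  - intros A v Hv. apply H2, Hv. left; auto.
Qed.

Lemma cons_sem2 Ax G a1 a2 b : ext_cons Ax G a1 -> ext_cons Ax G a2 ->
  (forall A v, le A (one A) (eval A v a1) -> le A (one A) (eval A v a2) -> le A (one A) (eval A v b)) -> ext_cons Ax G b.
Proof.
  intros H1 H1' H2. apply (cons_sem Ax G [a1; a2]).
  - intros a' [<-|[<-|[]]]; auto.
  - intros A v Hv. apply H2; apply Hv; simpl; auto.
Qed.

Lemma cons_sem0 Ax G b :
  (forall A v, le A (one A) (eval A v b)) -> ext_cons Ax G b.
Proof.
  intros H. apply (cons_sem Ax G []). intros _ []. intros; apply H.
Qed.

Lemma resI (A : FLe) (a b c : car A) : le A (mul A a b) c -> le A a (imp A b c).
Proof. apply residuation. Qed.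
Lemma resE (A : FLe) (a b c : car A) : le A a (imp A b c) -> le A (mul A a b) c.
Proof. apply residuation. Qed.

Record Th := {
  TT : form -> Prop;
  T_taut : forall b, (forall A v, le A (one A) (eval A v b)) -> TT b;
  T_mp : forall a b, TT a -> TT (Imp a b) -> TT b;
  T_adj : forall a b, TT a -> TT b -> TT (Meet a b) }.

Lemma T_imp (th : Th) a b : (forall A v, le A (eval A v a) (eval A v b)) -> TT th (Imp a b).
Proof. intro H. apply T_taut. intros A v. simpl. apply one_imp, H. Qed.

Lemma T_mpi (th : Th) a b : TT th a -> (forall A v, le A (eval A v a) (eval A v b)) -> TT th b.
Proof. intros H1 H2. eapply T_mp. exact H1. apply T_imp, H2. Qed.

Lemma T_mpi2 (th : Th) a1 a2 b : TT th a1 -> TT th a2 ->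
  (forall A v, le A (mul A (eval A v a1) (eval A v a2)) (eval A v b)) -> TT th b.
Proof.
  intros H1 H2 H. eapply T_mp. exact H2. eapply T_mp. exact H1.
  apply T_imp. intros A v. simpl. apply resI, H.
Qed.

Definition eqv (th : Th) a b := TT th (Imp a b) /\ TT th (Imp b a).

Lemma eqv_refl th a : eqv th a a.
Proof. split; apply T_imp; intros; apply le_refl. Qed.

Lemma eqv_sym th a b : eqv th a b -> eqv th b a.
Proof. intros [H1 H2]; split; auto. Qed.

Lemma T_trans th a b c : TT th (Imp a b) -> TT th (Imp b c) -> TT th (Imp a c).
Proof.
  intros H1 H2. apply (T_mpi2 th _ _ _ H1 H2). intros A v; simpl.
  apply resI. rewrite <- mulA, (mulC A _ (eval A v a)), mulA.
  eapply le_trans. apply mul_mono_l, mp_le.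
  rewrite mulC. apply mp_le.
Qed.

Lemma eqv_trans th a b c : eqv th a b -> eqv th b c -> eqv th a c.
Proof. intros [H1 H2] [H3 H4]; split; eapply T_trans; eauto. Qed.

Lemma mul_swap (A : FLe) (p q r s : car A) :
  mul A (mul A p q) (mul A r s) = mul A (mul A p r) (mul A q s).
Proof.
  rewrite <- !mulA. f_equal. rewrite !mulA. f_equal. apply mulC.
Qed.

Lemma cong_meet th a a' b b' : eqv th a a' -> eqv th b b' -> eqv th (Meet a b) (Meet a' b').
Proof.
  assert (forall a a' b b', TT th (Imp a a') -> TT th (Imp b b') -> TT th (Imp (Meet a b) (Meet a' b'))).
  { clear. intros a a' b b' H1 H2. apply (T_mpi th _ _ (T_adj th _ _ H1 H2)).
    intros A v; simpl. apply resI. apply meet_glb.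
    - eapply le_trans. apply mul_mono. apply meet_l. apply meet_l. apply mp_le.
    - eapply le_trans. apply mul_mono. apply meet_r. apply meet_r. apply mp_le. }
  intros [H1 H2] [H3 H4]; split; auto.
Qed.

Lemma cong_join th a a' b b' : eqv th a a' -> eqv th b b' -> eqv th (Join a b) (Join a' b').
Proof.
  assert (forall a a' b b', TT th (Imp a a') -> TT th (Imp b b') -> TT th (Imp (Join a b) (Join a' b'))).
  { clear. intros a a' b b' H1 H2. apply (T_mpi th _ _ (T_adj th _ _ H1 H2)).
    intros A v; simpl. apply resI. rewrite mulC. apply resE. apply join_lub; apply resI; rewrite mulC.
    - eapply le_trans; [|apply join_l]. eapply le_trans. apply mul_mono_l, meet_l. apply mp_le.
    - eapply le_trans; [|apply join_r]. eapply le_trans. apply mul_mono_l, meet_r. apply mp_le. }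
  intros [H1 H2] [H3 H4]; split; auto.
Qed.

Lemma cong_mul th a a' b b' : eqv th a a' -> eqv th b b' -> eqv th (Mul a b) (Mul a' b').
Proof.
  assert (forall a a' b b', TT th (Imp a a') -> TT th (Imp b b') -> TT th (Imp (Mul a b) (Mul a' b'))).
  { clear. intros a a' b b' H1 H2. apply (T_mpi2 th _ _ _ H1 H2).
    intros A v; simpl. apply resI. rewrite mul_swap. apply mul_mono; apply mp_le. }
  intros [H1 H2] [H3 H4]; split; auto.
Qed.

Lemma cong_imp th a a' b b' : eqv th a a' -> eqv th b b' -> eqv th (Imp a b) (Imp a' b').
Proof.
  assert (forall a a' b b', TT th (Imp a' a) -> TT th (Imp b b') -> TT th (Imp (Imp a b) (Imp a' b'))).
  { clear. intros a a' b b' H1 H2. apply (T_mpi2 th _ _ _ H1 H2).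
    intros A v; simpl. apply resI. apply resI.
    set (p := imp A (eval A v a') (eval A v a)).
    set (q := imp A (eval A v b) (eval A v b')).
    set (r := imp A (eval A v a) (eval A v b)).
    set (t := eval A v a').
    assert (E : mul A (mul A (mul A p q) r) t = mul A q (mul A r (mul A p t))).
    { rewrite <- !mulA. rewrite (mulC A p). rewrite <- !mulA. rewrite (mulC A t p). reflexivity. }
    rewrite E.
    eapply le_trans. apply mul_mono_r. apply mul_mono_r. apply mp_le.
    eapply le_trans. apply mul_mono_r. apply mp_le.
    apply mp_le. }
  intros [H1 H2] [H3 H4]; split; auto.
Qed.

Definition cls (th : Th) (a : form) : form -> Prop := fun b => eqv th a b.

Definition Lc (th : Th) := { P : form -> Prop | exists a, P = cls th a }.

Definition rep {th} (P : Lc th) : form :=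
  proj1_sig (constructive_indefinite_description _ (proj2_sig P)).

Lemma rep_spec {th} (P : Lc th) : proj1_sig P = cls th (rep P).
Proof. unfold rep. destruct (constructive_indefinite_description _ _). simpl. auto. Qed.

Definition mk th (a : form) : Lc th := exist _ (cls th a) (ex_intro _ a eq_refl).

Lemma Lc_ext th (P Q : Lc th) : proj1_sig P = proj1_sig Q -> P = Q.
Proof.
  destruct P as [P HP], Q as [Q HQ]; simpl. intro E. subst Q.
  f_equal. apply proof_irrelevance.
Qed.

Lemma mk_eq th a b : mk th a = mk th b <-> eqv th a b.
Proof.
  split.
  - intro H. assert (E : cls th a = cls th b) by (apply (f_equal (@proj1_sig _ _)) in H; exact H).
    assert (cls th b b) by apply eqv_refl. rewrite <- E in H0. exact H0.
  - intro H. apply Lc_ext. simpl.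
    apply functional_extensionality; intro c. apply propositional_extensionality.
    unfold cls; split; intro; eapply eqv_trans; eauto using eqv_sym.
Qed.

Lemma mk_rep th (P : Lc th) : mk th (rep P) = P.
Proof. apply Lc_ext. simpl. symmetry. apply rep_spec. Qed.

Lemma rep_mk th a : eqv th (rep (mk th a)) a.
Proof. apply mk_eq. apply mk_rep. Qed.

Definition Lmeet th (P Q : Lc th) := mk th (Meet (rep P) (rep Q)).
Definition Ljoin th (P Q : Lc th) := mk th (Join (rep P) (rep Q)).
Definition Lmul th (P Q : Lc th) := mk th (Mul (rep P) (rep Q)).
Definition Limp th (P Q : Lc th) := mk th (Imp (rep P) (rep Q)).

Lemma Lmeet_mk th a b : Lmeet th (mk th a) (mk th b) = mk th (Meet a b).
Proof. apply mk_eq, cong_meet; apply rep_mk. Qed.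
Lemma Ljoin_mk th a b : Ljoin th (mk th a) (mk th b) = mk th (Join a b).
Proof. apply mk_eq, cong_join; apply rep_mk. Qed.
Lemma Lmul_mk th a b : Lmul th (mk th a) (mk th b) = mk th (Mul a b).
Proof. apply mk_eq, cong_mul; apply rep_mk. Qed.
Lemma Limp_mk th a b : Limp th (mk th a) (mk th b) = mk th (Imp a b).
Proof. apply mk_eq, cong_imp; apply rep_mk. Qed.

Lemma eqv_sem th a b : (forall A v, eval A v a = eval A v b) -> eqv th a b.
Proof. intro H. split; apply T_imp; intros A v; rewrite H; apply le_refl. Qed.

Lemma eqv_le th a b : eqv th (Meet a b) a <-> TT th (Imp a b).
Proof.
  split.
  - intros [H1 H2]. apply (T_mpi th _ _ H2). intros A v; simpl.
    apply resI. eapply le_trans. apply mp_le. apply meet_r.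
  - intro H. split.
    + apply T_imp. intros; apply meet_l.
    + assert (H0 : TT th (Imp a a)) by (apply T_imp; intros; apply le_refl).
      apply (T_mpi th _ _ (T_adj th _ _ H0 H)). intros A v; simpl.
      apply resI. apply meet_glb.
      * eapply le_trans. apply mul_mono_l, meet_l. apply mp_le.
      * eapply le_trans. apply mul_mono_l, meet_r. apply mp_le.
Qed.

Ltac lc_norm th :=
  repeat match goal with
  | P : Lc th |- _ => rewrite <- (mk_rep th P); generalize (rep P); clear P; intro
  end;
  repeat (rewrite ?Lmeet_mk, ?Ljoin_mk, ?Lmul_mk, ?Limp_mk).

Ltac lc_eq th := lc_norm th; apply mk_eq, eqv_sem; intros ? ?; simpl.

Lemma L_res th a b c : TT th (Imp (Mul a b) c) <-> TT th (Imp a (Imp b c)).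
Proof.
  split; intro H; apply (T_mpi th _ _ H); intros A v; simpl.
  - apply resI, resI. rewrite <- mulA. apply mp_le.
  - apply resI. rewrite mulA. apply resE, resE, le_refl.
Qed.

Definition LA (th : Th) : FLe.
Proof.
  refine (Build_FLe (Lc th) (Lmeet th) (Ljoin th) (Lmul th) (Limp th) (mk th Zero) (mk th One)
    _ _ _ _ _ _ _ _ _ _); intros.
  - lc_eq th. apply meetA.
  - lc_eq th. apply joinA.
  - lc_eq th. apply meetC.
  - lc_eq th. apply joinC.
  - lc_eq th. apply meet_join_absorb.
  - lc_eq th. apply join_meet_absorb.
  - lc_eq th. apply mulA.
  - lc_eq th. apply mulC.
  - lc_eq th. apply mul1.
  - lc_norm th. rewrite !mk_eq, !eqv_le. apply L_res.
Defined.

Lemma LA_eval th p : eval (LA th) (fun i => mk th (Var i)) p = mk th p.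
Proof.
  induction p; simpl; try reflexivity; rewrite IHp1, IHp2;
  [apply Lmeet_mk | apply Ljoin_mk | apply Lmul_mk | apply Limp_mk].
Qed.

Lemma LA_one th p : le (LA th) (one (LA th)) (mk th p) <-> TT th p.
Proof.
  unfold le. simpl. rewrite Lmeet_mk, mk_eq.
  transitivity (eqv th (Meet One p) One). split; [intros [? ?]|intros [? ?]]; split; auto.
  rewrite eqv_le. split; intro H; apply (T_mpi th _ _ H); intros A v; simpl.
  - rewrite <- (mul1 A (imp A (one A) (eval A v p))). apply mp_le.
  - apply resI. rewrite mul1. apply le_refl.
Qed.

Lemma one_impE (A : FLe) (a b : car A) : le A (one A) (imp A a b) -> le A a b.
Proof. apply one_imp. Qed.
Lemma one_impI (A : FLe) (a b : car A) : le A a b -> le A (one A) (imp A a b).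
Proof. apply one_imp. Qed.

Lemma u_le1 (A : FLe) v psi : le A (eval A v (Meet One psi)) (one A).
Proof. apply meet_l. Qed.

Definition DTth (Ax G : form -> Prop) (psi : form) : Th.
Proof.
  refine {| TT := fun phi => exists n, ext_cons Ax G (Imp (powS (Meet One psi) n) phi) |}.
  - intros b Hb. exists 0. apply cons_sem0. intros A v. simpl. apply one_impI.
    eapply le_trans. apply meet_l. apply Hb.
  - intros a b [n1 H1] [n2 H2]. exists (S (n1 + n2)).
    apply (cons_sem2 Ax G _ _ _ H1 H2). intros A v E1 E2.
    cbn [eval] in *. rewrite !eval_powS in *. apply one_impE in E1, E2. apply one_impI.
    rewrite apow_add. eapply le_trans. apply mul_mono. exact E1. exact E2.
    rewrite mulC. apply mp_le.
  - intros a b [n1 H1] [n2 H2]. exists (S (n1 + n2)).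
    apply (cons_sem2 Ax G _ _ _ H1 H2). intros A v E1 E2.
    cbn [eval] in *. rewrite !eval_powS in *. apply one_impE in E1, E2. apply one_impI.
    rewrite apow_add. apply meet_glb.
    + eapply le_trans; [|exact E1]. rewrite <- (mul1 A (apow A _ n1)) at 2.
      apply mul_mono_r, apow_le1, meet_l.
    + eapply le_trans; [|exact E2]. rewrite <- (mul1l A (apow A _ n2)) at 2.
      apply mul_mono_l, apow_le1, meet_l.
Defined.

Lemma DT (Ax G : form -> Prop) psi chi :
  ext_cons Ax (fun g => G g \/ g = psi) chi ->
  exists n, ext_cons Ax G (Imp (powS (Meet One psi) n) chi).
Proof.
  intros [S [HS HE]].
  pose (th := DTth Ax G psi).
  assert (Hc : TT th chi).
  { apply LA_one. rewrite <- LA_eval. apply HE.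
    intros g Hg. rewrite LA_eval. apply LA_one. simpl.
    exists 0. destruct (HS g Hg) as [[Hg'|<-]|Hg'].
    - apply (cons_sem1 Ax G g). apply cons_in; auto.
      intros A v H. simpl. apply one_impI. eapply le_trans. apply meet_l. exact H.
    - apply cons_sem0. intros A v. simpl. apply one_impI. apply meet_r.
    - apply (cons_sem1 Ax G g). apply cons_ax; auto.
      intros A v H. simpl. apply one_impI. eapply le_trans. apply meet_l. exact H. }
  exact Hc.
Qed.

Lemma subst_powS s p n : subst s (powS p n) = powS (subst s p) n.
Proof. induction n; simpl; congruence. Qed.

Lemma subst_pow s p n : subst s (pow p n) = pow (subst s p) n.
Proof. apply subst_powS. Qed.

Lemma pow_S p n : pow p (S n) = powS p n.
Proof. unfold pow. rewrite Nat.sub_succ, Nat.sub_0_r. reflexivity. Qed.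

Lemma eval_pow (A : FLe) v p n : eval A v (pow p n) = apow A (eval A v p) (n - 1).
Proof. apply eval_powS. Qed.

Lemma cons_mp Ax G a b : ext_cons Ax G a -> ext_cons Ax G (Imp a b) -> ext_cons Ax G b.
Proof.
  intros H1 H2. apply (cons_sem2 Ax G _ _ _ H1 H2). intros A v E1 E2.
  simpl in E2. apply one_impE in E2. eapply le_trans; eauto.
Qed.

Lemma bot_le1 (A : FLe) v : le A (eval A v bot) (one A).
Proof.
  simpl. repeat (eapply le_trans; [apply meet_l|]). apply le_refl.
Qed.

Lemma meet_one_bot (A : FLe) v : eval A v (Meet One bot) = eval A v bot.
Proof. simpl eval at 1. rewrite meetC. apply bot_le1. Qed.

Lemma bot_collapse (A : FLe) v (s : nat -> form) p :
  (forall i, s i = One) -> le A (one A) (eval A v bot) -> eval A v (subst s p) = one A.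
Proof.
  intros Hs H. simpl in H.
  assert (H10 : le A (one A) (imp A (one A) (zero A))).
  { eapply le_trans. exact H. do 3 (eapply le_trans; [apply meet_l|]). apply meet_r. }
  assert (H01 : le A (one A) (imp A (zero A) (one A))).
  { eapply le_trans. exact H. do 2 (eapply le_trans; [apply meet_l|]). apply meet_r. }
  assert (H11 : le A (one A) (imp A (imp A (one A) (one A)) (one A))).
  { eapply le_trans. exact H. apply meet_r. }
  apply one_impE in H10, H01, H11.
  assert (Z : zero A = one A) by (apply le_antisym; auto).
  assert (I : imp A (one A) (one A) = one A).
  { apply le_antisym; auto. apply one_impI, le_refl. }
  induction p; simpl; try rewrite IHp1, IHp2; auto.
  - rewrite Hs. reflexivity.
  - apply meet_idem.
  - apply le_join, le_refl.
  - apply mul1.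
Qed.

Lemma nth_one_list i : nth i [One] One = One.
Proof. destruct i as [|[|i]]; reflexivity. Qed.

Lemma fold_props (A : FLe) (w : nat -> car A) (l : list nat) (acc : form) :
  let F := fold_left (fun a i => Meet a (Var i)) l acc in
  (le A (eval A w acc) (one A) -> le A (eval A w F) (one A)) /\
  (le A (eval A w F) (eval A w acc)) /\
  (forall i, In i l -> le A (eval A w F) (w i)) /\
  (le A (one A) (eval A w acc) -> (forall i, In i l -> le A (one A) (w i)) -> le A (one A) (eval A w F)).
Proof.
  revert acc. induction l as [|j l IH]; intro acc; simpl.
  - split; auto. split. apply le_refl. split; auto. intros _ [].
  - destruct (IH (Meet acc (Var j))) as [I1 [I2 [I3 I4]]]. simpl in *.
    split; [|split; [|split]].
    + intro H. apply I1. eapply le_trans. apply meet_l. exact H.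
    + eapply le_trans. exact I2. apply meet_l.
    + intros i [<-|Hi]; auto. eapply le_trans. exact I2. apply meet_r.
    + intros H1 H2. apply I4; auto. apply meet_glb; auto.
Qed.

Lemma vars_fold n l acc : vars_below n acc -> (forall i, In i l -> i < n) ->
  vars_below n (fold_left (fun a i => Meet a (Var i)) l acc).
Proof.
  revert acc; induction l as [|j l IH]; intros acc H1 H2; simpl; auto.
  apply IH. simpl. split; auto. apply H2; left; auto. intros; apply H2; right; auto.
Qed.

Lemma vars_powS n p j : vars_below n p -> vars_below n (powS p j).
Proof. intro H; induction j; simpl; auto. Qed.

Lemma B_props (A : FLe) v n (phis : list form) : length phis = n ->
  let B := subst (fun i => nth i phis One) (big_meet n) in
  le A (eval A v B) (one A) /\
  (forall phi, In phi phis -> le A (eval A v B) (eval A v phi)) /\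
  ((forall phi, In phi phis -> le A (one A) (eval A v phi)) -> le A (one A) (eval A v B)).
Proof.
  intros Hlen B. unfold B, big_meet. rewrite eval_subst.
  destruct (fold_props A (fun i => eval A v (nth i phis One)) (seq 0 n) One) as [I1 [I2 [I3 I4]]].
  split; [|split].
  - apply I1. apply le_refl.
  - intros phi Hphi. destruct (In_nth phis phi One Hphi) as [i [Hi E]].
    rewrite <- E. apply I3. apply in_seq. lia.
  - intros H. apply I4. apply le_refl. intros i Hi. apply in_seq in Hi.
    apply H. apply nth_In. lia.
Qed.

Lemma part2 (Ax : form -> Prop) (HAx : subst_closed Ax) k f :
  conditions Ax k f -> IL_witnessed Ax (sim k).
Proof.
  intros [Hk [Hf [H1 H2]]] n Hn Gamma phis Hlen.
  set (sg := fun i => nth i phis One).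
  set (B := subst sg (big_meet n)).
  assert (BP := fun A v => B_props A v n phis Hlen). simpl in BP. fold sg in BP. fold B in BP.
  assert (RHS : (forall psi, In psi (sim k n) -> ext_cons Ax (of_list Gamma) (subst sg psi))
                <-> ext_cons Ax (of_list Gamma) (neg (pow B k))).
  { unfold sim. split.
    - intro H. specialize (H _ (or_introl eq_refl)). unfold neg in *. cbn [subst] in H.
      rewrite subst_pow in H. exact H.
    - intros H psi [<-|[]]. unfold neg in *. cbn [subst]. rewrite subst_pow. exact H. }
  fold sg. rewrite RHS. clear RHS. split.
  - intro Hinc.
    assert (Hb : ext_cons Ax (fun g => of_list Gamma g \/ g = B) bot).
    { apply (cons_cut Ax _ (of_list (Gamma ++ phis))); [|apply Hinc].
      intros h Hh. unfold of_list in Hh. apply in_app_or in Hh. destruct Hh as [Hh|Hh].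
      - apply cons_in. left; exact Hh.
      - apply (cons_sem1 Ax _ B). apply cons_in; right; auto.
        intros A v E. eapply le_trans. exact E. apply (BP A v), Hh. }
    destruct (DT Ax _ _ _ Hb) as [n' Hn'].
    assert (Hi := cons_thm_subst Ax (of_list Gamma) (fun _ => B) _ HAx (H2 (S n') (le_n_S _ _ (Nat.le_0_l _)))).
    unfold neg in Hi. cbn [subst] in Hi. rewrite !subst_pow in Hi. cbn [subst] in Hi.
    rewrite !subst_pow in Hi.
    assert (Hi' : ext_cons Ax (of_list Gamma) (Imp (pow (Meet One (neg (pow (Meet B One) (S n')))) (f (S n')))
       (neg (pow (Meet One B) k)))) by exact Hi. clear Hi. rename Hi' into Hi.
    assert (Hp : ext_cons Ax (of_list Gamma) (pow (Meet One (neg (pow (Meet B One) (S n')))) (f (S n')))).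
    { apply (cons_sem1 Ax _ _ _ Hn'). intros A v E. rewrite eval_pow. apply apow_ge1.
      simpl eval. apply meet_glb. apply le_refl. rewrite eval_pow, Nat.sub_succ, Nat.sub_0_r.
      cbn [eval] in *. rewrite eval_powS in E. cbn [eval] in E. rewrite (meetC A (eval A v B) (one A)). exact E. }
    assert (Hq := cons_mp Ax _ _ _ Hp Hi).
    apply (cons_sem1 Ax _ _ _ Hq). intros A v E. unfold neg in *. cbn [eval] in *.
    rewrite !eval_pow in *. cbn [eval] in E.
    replace (meet A (one A) (eval A v B)) with (eval A v B) in E; auto.
    rewrite meetC. symmetry. apply (BP A v).
  - intros Hneg phi.
    assert (Hneg' : ext_cons Ax (of_list (Gamma ++ phis)) (neg (pow B k))).
    { apply (cons_mono Ax (of_list Gamma)); auto. intros g Hg; apply in_or_app; auto. }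
    assert (HB : ext_cons Ax (of_list (Gamma ++ phis)) B).
    { apply (cons_sem Ax _ phis).
      - intros a Ha. apply cons_in. apply in_or_app; auto.
      - intros A v H. apply (BP A v), H. }
    assert (Hpb : ext_cons Ax (of_list (Gamma ++ phis)) (pow bot k)).
    { apply (cons_sem2 Ax _ _ _ _ HB Hneg'). intros A v E1 E2.
      unfold neg in E2. cbn [eval] in E2. rewrite eval_pow in *. apply one_impE in E2.
      apply apow_ge1. eapply le_trans; [|exact E2]. apply apow_ge1, E1. }
    assert (Hi := cons_thm_subst Ax (of_list (Gamma ++ phis)) (fun _ => phi) _ HAx H1).
    cbn [subst] in Hi. rewrite subst_pow in Hi.
    assert (Hi' : ext_cons Ax (of_list (Gamma ++ phis)) (Imp (pow bot k) phi)) by exact Hi.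
    exact (cons_mp Ax _ _ _ Hpb Hi').
Qed.

Lemma part1 (Ax : form -> Prop) (HAx : subst_closed Ax) :
  has_IL Ax -> exists (k : nat) (f : nat -> nat), conditions Ax k f.
Proof.
  intros [tilde [_ HIL]].
  set (tau := tilde 1).
  assert (HIL1 : forall Gamma phi, inconsistent Ax (Gamma ++ [phi]) <->
     forall psi, In psi tau -> ext_cons Ax (of_list Gamma) (subst (fun i => nth i [phi] One) psi)).
  { intros Gamma phi. apply (HIL 1 (le_n 1) Gamma [phi] eq_refl). }
  set (G1 := fun phi => map (subst (fun i => nth i [phi] One)) tau).
  assert (Same : forall phi, inconsistent Ax (G1 phi ++ [phi])).
  { intro phi. apply HIL1. intros psi Hpsi. apply cons_in. unfold of_list, G1. apply in_map; auto. }
  assert (Botinc : inconsistent Ax [bot]).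
  { intro phi. apply (cons_cut Ax _ (of_list (G1 One ++ [One]))); [|apply Same].
    intros h Hh. unfold of_list in Hh. apply in_app_or in Hh. destruct Hh as [Hh|[<-|[]]].
    - unfold G1 in Hh. apply in_map_iff in Hh. destruct Hh as [psi [<- _]].
      apply (cons_sem1 Ax _ bot). apply cons_in. left; auto.
      intros A v E. rewrite (bot_collapse A v); auto. apply le_refl. apply nth_one_list.
    - apply cons_sem0. intros; apply le_refl. }
  assert (K0 : exists n0, theorem Ax (Imp (powS (Meet One bot) n0) x)).
  { apply DT. apply (cons_mono Ax (of_list [bot])); [|apply Botinc].
    intros g [<-|[]]. right; auto. }
  destruct K0 as [n0 K0].
  assert (K1 : exists n1, ext_cons Ax (of_list (G1 x)) (Imp (powS (Meet One x) n1) bot)).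
  { apply DT. apply (cons_mono Ax (of_list (G1 x ++ [x]))); [|apply Same].
    intros g Hg. unfold of_list in Hg. apply in_app_or in Hg. destruct Hg as [Hg|[<-|[]]].
    left; auto. right; auto. }
  destruct K1 as [n1 K1].
  set (K := Nat.max n0 n1).
  assert (Hf : forall m, exists n2, theorem Ax (Imp (powS (Meet One (neg (pow (Meet x One) m))) n2)
                                     (neg (pow (Meet One x) (S K))))).
  { intro m. set (g := neg (pow (Meet x One) m)).
    assert (Inc : inconsistent Ax ([g] ++ [x])).
    { intro phi. apply (cons_cut Ax _ (of_list [bot])); [|apply Botinc].
      intros h [<-|[]].
      apply (cons_sem2 Ax _ g x); [apply cons_in; left; auto | apply cons_in; right; left; auto |].
      intros A v E1 E2. unfold g, neg in E1. cbn [eval] in E1. rewrite eval_pow in E1.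
      cbn [eval] in E1.
      assert (E3 : le A (one A) (imp A (apow A (meet A (eval A v x) (one A)) (m - 1)) (eval A v bot))).
      { exact E1. }
      apply one_impE in E3. eapply le_trans; [|exact E3]. apply apow_ge1.
      apply meet_glb; auto. apply le_refl. }
    pose proof (proj1 (HIL1 [g] x) Inc) as Inc2. clear Inc. rename Inc2 into Inc.
    assert (Hc : ext_cons Ax (of_list [g]) (Imp (powS (Meet One x) n1) bot)).
    { apply (cons_cut Ax _ (of_list (G1 x))); auto.
      intros h Hh. unfold of_list, G1 in Hh. apply in_map_iff in Hh.
      destruct Hh as [psi [<- Hpsi]]. apply Inc; auto. }
    assert (Hd : ext_cons Ax (of_list [g]) (neg (pow (Meet One x) (S K)))).
    { apply (cons_sem1 Ax _ _ _ Hc). intros A v E. unfold neg. rewrite pow_S.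
      cbn [eval] in *. rewrite eval_powS in *. apply one_impE in E. apply one_impI.
      eapply le_trans; [|exact E]. apply apow_anti; [apply meet_l| apply (Nat.le_max_r n0 n1)]. }
    apply DT. apply (cons_mono Ax (of_list [g])); auto. intros h [<-|[]]. right; auto. }
  apply functional_choice in Hf. destruct Hf as [f' Hf].
  exists (S K), (fun m => S (f' m)). split; [|split; [|split]].
  - apply le_n_S, Nat.le_0_l.
  - intros; apply le_n_S, Nat.le_0_l.
  - rewrite pow_S. apply (cons_sem1 Ax _ _ _ K0). intros A v E. cbn [eval] in *.
    rewrite eval_powS in *. rewrite meet_one_bot in E. apply one_impE in E. apply one_impI.
    eapply le_trans; [|exact E]. apply apow_anti. apply bot_le1. apply Nat.le_max_l.
  - intros m _. rewrite pow_S. apply Hf.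
Qed.

Theorem proposition10p5 (Ax : form -> Prop) (HAx : subst_closed Ax) :
  (has_IL Ax <-> exists (k : nat) (f : nat -> nat), conditions Ax k f) /\
  (forall (k : nat) (f : nat -> nat), conditions Ax k f -> IL_witnessed Ax (sim k)).
Proof.
  split; [split|].
  - apply part1; auto.
  - intros [k [f Hc]]. exists (sim k). split.
    + intros n psi [<-|[]]. unfold neg, pow. simpl vars_below at 1. split.
      * apply vars_powS. unfold big_meet. apply vars_fold. simpl; auto.
        intros i Hi. apply in_seq in Hi. lia.
      * simpl. tauto.
    + apply (part2 Ax HAx k f Hc).
  - apply part2; auto.
Qed.
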